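(* Let $(X,r)$ be a non-degenerate involutive set-theoretic solution of the Yang–Baxter equation with $|X|=n$, identified with $\{1,\dots,n\}$. If $(X,r)$ is irretractable, indecomposable and satisfies condition $(\mathfrak{C})$ — there exists a natural number $\ell$ such that for every $1\le s\le n$ there exist $1\le i_1,\dots,i_\ell\le n$ with $\sigma_{i_1}\cdots\sigma_{i_\ell}(1)=s$ — then for every natural number $k\ge1$ there exists a non-degenerate involutive set-theoretic solution of size $n^{2^k}$ that is also irretractable and indecomposable.
   Context: A set-theoretic solution of the Yang–Baxter equation is a pair $(X,r)$ with $r:X\times X\to X\times X$, $r(x,y)=(\sigma_x(y),\gamma_y(x))$, satisfying $r^{12}r^{23}r^{12}=r^{23}r^{12}r^{23}$ on $X^3$ ($r^{12}=r\times\mathrm{Id}_X$, $r^{23}=\mathrm{Id}_X\times r$). Non-degenerate: all $\sigma_x,\gamma_x$ bijective; involutive: $r\circ r=\mathrm{Id}$. A subset $Y$ is non-degenerate invariant if $r(Y\times Y)\subseteq Y\times Y$ and $(Y,r|_{Y^2})$ is a non-degenerate involutive solution; $(X,r)$ is decomposable if $X$ is a union of two non-empty disjoint non-degenerate invariant subsets, indecomposable otherwise. Retraction: $x\sim y$ iff $\sigma_x=\sigma_y$, $\mathrm{Ret}(X,r)=(X/\!\sim,r')$ with $r'([x],[y])=([\sigma_x(y)],[\gamma_y(x)])$; $(X,r)$ is irretractable if there is no natural number $\ell$ with $|\mathrm{Ret}^\ell(X,r)|=1$ (where $\mathrm{Ret}^k=\mathrm{Ret}(\mathrm{Ret}^{k-1})$).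 *)

(* Defs.v *)
From mathcomp Require Import all_boot.
Set Implicit Arguments. Unset Strict Implicit. Unset Printing Implicit Defensive.

Section Sol.
Variables (X : finType) (r : X * X -> X * X).

Definition sigm (x : X) : X -> X := fun y => (r (x, y)).1.
Definition gamm (y : X) : X -> X := fun x => (r (x, y)).2.

Definition r12 (t : X * X * X) : X * X * X :=
  let: (x, y, z) := t in ((r (x, y)).1, (r (x, y)).2, z).
Definition r23 (t : X * X * X) : X * X * X :=
  let: (x, y, z) := t in (x, (r (y, z)).1, (r (y, z)).2).

Definition YBE : Prop := forall t, r12 (r23 (r12 t)) = r23 (r12 (r23 t)).
Definition nondegenerate : Prop :=
  forall x, bijective (sigm x) /\ bijective (gamm x).
Definition involutive_sol : Prop := forall p, r (r p) = p.

Definition ndi_solution : Prop := [/\ YBE, nondegenerate & involutive_sol].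

Definition bij_on (Y : {set X}) (f : X -> X) : Prop :=
  {in Y, forall y, f y \in Y} /\ {in Y &, injective f} /\
  (forall z, z \in Y -> exists2 y, y \in Y & f y = z).

(* Y is a non-degenerate invariant subset: r(Y x Y) ⊆ Y x Y and the
   restriction (Y, r|_{Y^2}) is a non-degenerate involutive solution
   (all conditions written out on elements of Y). *)
Definition nd_invariant (Y : {set X}) : Prop :=
  [/\ (forall x y, x \in Y -> y \in Y -> (r (x, y)).1 \in Y /\ (r (x, y)).2 \in Y),
      (forall x y z, x \in Y -> y \in Y -> z \in Y ->
          r12 (r23 (r12 (x, y, z))) = r23 (r12 (r23 (x, y, z)))),
      (forall x, x \in Y -> bij_on Y (sigm x) /\ bij_on Y (gamm x)) &
      (forall x y, x \in Y -> y \in Y -> r (r (x, y)) = (x, y))].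

Definition decomposable : Prop :=
  exists Y1 Y2 : {set X},
    [/\ Y1 != set0, Y2 != set0, [disjoint Y1 & Y2] & Y1 :|: Y2 = setT] /\
    nd_invariant Y1 /\ nd_invariant Y2.
Definition indecomposable : Prop := ~ decomposable.

End Sol.

(* Finite "solution structures" (carrier + map), to iterate the retraction. *)
Record fsol := FSol { fcar : finType; fr : fcar * fcar -> fcar * fcar }.

Section Retraction.
Variable S : fsol.
Local Notation X := (fcar S).
Local Notation r := (@fr S).

Definition ret_cls (x : X) : {set X} :=
  [set y | [forall z, sigm r y z == sigm r x z]].

Definition ret_pred (A : {set X}) : bool := [exists x, A == ret_cls x].
Definition RetT : finType := {A : {set X} | ret_pred A}.

Lemma ret_cls_pred (z : X) : ret_pred (ret_cls z).
Proof. by apply/existsP; exists z. Qed.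

Definition ret_elt (z : X) : RetT := exist _ (ret_cls z) (ret_cls_pred z).

Definition ret_rep (A : RetT) : X := xchoose (existsP (valP A)).

Definition ret_r (p : RetT * RetT) : RetT * RetT :=
  let x := ret_rep p.1 in let y := ret_rep p.2 in
  (ret_elt (sigm r x y), ret_elt (gamm r y x)).

Definition Ret : fsol := @FSol RetT ret_r.
End Retraction.

Definition irretractable (X : finType) (r : X * X -> X * X) : Prop :=
  ~ exists l : nat, #|fcar (iter l Ret (@FSol X r))| = 1.

(* condition (C) for X = {1..n} ~ 'I_n, with "1" the element one : 'I_n:
   sigma_{i_1} ... sigma_{i_l}(1) = s *)
Definition condC (n : nat) (r : 'I_n * 'I_n -> 'I_n * 'I_n) (one : 'I_n) : Prop :=
  exists l : nat, forall s : 'I_n, exists ix : seq 'I_n,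
    size ix = l /\ foldr (fun i x => sigm r i x) one ix = s.

(* Main.v *)
Require Import Defs.
From mathcomp Require Import all_boot.
Set Implicit Arguments. Unset Strict Implicit. Unset Printing Implicit Defensive.

Definition sg (S : fsol) := sigm (@fr S).
Definition sim (S : fsol) (x y : fcar S) := forall z, sg x z = sg y z.
Definition Good (S : fsol) :=
  (forall x : fcar S, injective (sg x)) /\
  (forall x a b : fcar S, sg (sg x a) b = x ->
     forall v, sg (sg x a) (sg b v) = sg x (sg a v)).

Section RetTh.
Variable S : fsol.
Local Notation X := (fcar S).

Lemma ret_elt_eq (x y : X) : ret_elt x = ret_elt y <-> sim x y.
Proof.
split.
- move=> /(congr1 val) /= E z.
  have : y \in ret_cls y by rewrite inE; apply/forallP => w.
  rewrite -E inE => /forallP /(_ z) /eqP H; exact: (esym H).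
- move=> H; apply: val_inj => /=; apply/setP => w; rewrite !inE.
  have H' : forall z, sigm (@fr S) x z = sigm (@fr S) y z := H.
  by apply/forallP/forallP => K z; have := K z; rewrite H'.
Qed.

Lemma rep_eq (A : RetT S) : A = ret_elt (ret_rep A).
Proof.
apply: val_inj => /=; apply/eqP.
exact: (xchooseP (existsP (valP A))).
Qed.

Lemma rep_elt (x : X) : sim (ret_rep (ret_elt x)) x.
Proof. apply/ret_elt_eq; symmetry; exact: rep_eq. Qed.

Lemma sgRet (A B : RetT S) :
  @sg (Ret S) A B = ret_elt (sg (ret_rep A) (ret_rep B)).
Proof. by []. Qed.

Hypothesis G : Good S.

Lemma sg_surj (x z : X) : exists u, sg x u = z.
Proof.
have [g _ gK] := injF_bij (G.1 x); by exists (g z).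
Qed.

Lemma L1 (a a' z u u' : X) : sim a a' -> sg z u = a -> sg z u' = a' -> sim u u'.
Proof.
move=> Ha Hu Hu'.
have [b Hb] := sg_surj a z.
have [b' Hb'] := sg_surj a' z.
have Ebb : b = b'.
  apply: (G.1 a); by rewrite Hb Ha Hb'.
move=> v; apply: (G.1 z).
have E1 := G.2 z u b; rewrite Hu in E1; have {}E1 := E1 Hb v.
have E2 := G.2 z u' b'; rewrite Hu' in E2; have {}E2 := E2 Hb' v.
by rewrite -E1 -E2 Ha Ebb.
Qed.

Lemma L2 (z u u' : X) : sim u u' -> sim (sg z u) (sg z u').
Proof.
pose R := [set p : X * X | [forall w, sg p.1 w == sg p.2 w]].
have simR p : reflect (sim p.1 p.2) (p \in R).
  rewrite inE; apply: (iffP forallP).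
  by move=> H w; apply/eqP.
  by move=> H w; rewrite H.
pose g (p : X * X) := (sg z p.1, sg z p.2).
have ginj : injective g.
  by move=> [p1 p2] [q1 q2] [/(G.1 z) -> /(G.1 z) ->].
have sub : g @^-1: R \subset R.
  apply/subsetP => p; rewrite inE => /simR H; apply/simR.
  exact: (L1 H).
have := subset_cardP (card_preimset R ginj) sub.
move=> /(_ (u, u')) E H.
have : (u, u') \in R by apply/simR.
by rewrite -E inE => /simR.
Qed.

Lemma hom_elt (x y : X) : @sg (Ret S) (ret_elt x) (ret_elt y) = ret_elt (sg x y).
Proof.
rewrite sgRet; apply/ret_elt_eq => w.
rewrite rep_elt; apply: L2; exact: rep_elt.
Qed.

Lemma elt_surj (A : RetT S) : exists x, A = ret_elt x.
Proof. exists (ret_rep A); exact: rep_eq. Qed.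

Lemma Good_Ret : Good (Ret S).
Proof.
split.
- move=> A B B'; have [a ->] := elt_surj A; have [u ->] := elt_surj B.
  have [u' ->] := elt_surj B'.
  rewrite !hom_elt => /ret_elt_eq H; apply/ret_elt_eq.
  exact: (L1 H).
- move=> A B C; have [x ->] := elt_surj A; have [a ->] := elt_surj B.
  have [b ->] := elt_surj C.
  rewrite !hom_elt => /ret_elt_eq Hb V; have [v ->] := elt_surj V.
  rewrite !hom_elt; congr ret_elt.
  have [b0 Hb0] := sg_surj (sg x a) x.
  have Hs : sim b b0 by exact: (L1 Hb erefl Hb0).
  by rewrite Hs (G.2 _ _ _ Hb0).
Qed.
End RetTh.

Definition shom (S T : fsol) (h : fcar S -> fcar T) :=
  (forall t, exists s, h s = t) /\ (forall x y, h (sg x y) = sg (h x) (h y)).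

Lemma hom_Ret (S T : fsol) (h : fcar S -> fcar T) :
  Good S -> Good T -> shom h -> exists H : fcar (Ret S) -> fcar (Ret T), shom H.
Proof.
move=> GS GT [hs hh].
have hsim x y : sim x y -> sim (h x) (h y).
  move=> E z; have [s <-] := hs z; by rewrite -!hh E.
exists (fun A => ret_elt (h (ret_rep A))).
have He x : ret_elt (h (ret_rep (ret_elt x))) = ret_elt (h x).
  apply/ret_elt_eq; apply: hsim; exact: rep_elt.
split.
- move=> B; have [t ->] := elt_surj B; have [s <-] := hs t.
  by exists (ret_elt s); rewrite He.
- move=> A B; have [x ->] := elt_surj A; have [y ->] := elt_surj B.
  by rewrite hom_elt // !He hh hom_elt.
Qed.

Lemma hom_iter (S T : fsol) (h : fcar S -> fcar T) :
  Good S -> Good T -> shom h -> forall l,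
  [/\ Good (iter l Ret S), Good (iter l Ret T) &
    exists H : fcar (iter l Ret S) -> fcar (iter l Ret T), shom H].
Proof.
move=> GS GT hh; elim=> [|l [G1 G2 [H HH]]] /=; first by split => //; exists h.
split; [exact: Good_Ret | exact: Good_Ret |].
exact: hom_Ret HH.
Qed.

Lemma card_surj1 (A B : finType) (h : A -> B) :
  (forall b, exists a, h a = b) -> #|A| = 1 -> #|B| = 1.
Proof.
move=> hs /fintype1 [x0 Hx0].
apply: (@eq_card1 _ (h x0)) => b; rewrite !inE; apply/esym/eqP.
by have [a <-] := hs b; rewrite (Hx0 a).
Qed.

Lemma Good_of (X : finType) (r : X * X -> X * X) : ndi_solution r -> Good (FSol r).
Proof.
case=> Hy Hn Hi; split.
- move=> x; exact: bij_inj (Hn x).1.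
- move=> x a b Hb v.
  have E := congr1 (fun t => t.1.1) (Hy (x, a, v)); simpl in E.
  have Hg : (r (sigm r x a, gamm r a x)).1 = x.
    by have := Hi (x, a); rewrite /sigm /gamm; case: (r (x, a)) => p q /= ->.
  have Eb : b = gamm r a x.
    apply: (bij_inj (Hn (sigm r x a)).1); by rewrite [LHS]Hb [RHS]Hg.
  rewrite Eb; exact: E.
Qed.

Definition prodr (X : finType) (r : X * X -> X * X) (p : (X * X) * (X * X)) :
  (X * X) * (X * X) :=
  (((r (p.1.1, p.2.1)).1, (r (p.1.2, p.2.2)).1),
   ((r (p.1.1, p.2.1)).2, (r (p.1.2, p.2.2)).2)).

Lemma ndi_prod (X : finType) (r : X * X -> X * X) :
  ndi_solution r -> ndi_solution (prodr r).
Proof.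
case=> Hy Hn Hi; split.
- move=> [[[a b] [c d]] [e f]].
  have := Hy (a, c, e); have := Hy (b, d, f).
  rewrite /r12 /r23 /prodr /= => -[-> -> ->] [-> -> ->]; done.
- move=> [a b]; split.
  + have [g1 g1K Kg1] := (Hn a).1; have [g2 g2K Kg2] := (Hn b).1.
    exists (fun p => (g1 p.1, g2 p.2)) => -[c d].
    * by rewrite /sigm /prodr /=; have := g1K c; have := g2K d;
        rewrite /sigm => -> ->.
    * by rewrite /sigm /prodr /=; have := Kg1 c; have := Kg2 d;
        rewrite /sigm => -> ->.
  + have [g1 g1K Kg1] := (Hn a).2; have [g2 g2K Kg2] := (Hn b).2.
    exists (fun p => (g1 p.1, g2 p.2)) => -[c d].
    * by rewrite /gamm /prodr /=; have := g1K c; have := g2K d;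
        rewrite /gamm => -> ->.
    * by rewrite /gamm /prodr /=; have := Kg1 c; have := Kg2 d;
        rewrite /gamm => -> ->.
- move=> [[a b] [c d]]; rewrite /prodr /=.
  have := Hi (a, c); have := Hi (b, d).
  case: (r (a, c)) => p1 p2; case: (r (b, d)) => q1 q2 /= -> ->; done.
Qed.

Lemma irr_prod (X : finType) (r : X * X -> X * X) :
  ndi_solution r -> irretractable r -> irretractable (prodr r).
Proof.
move=> Hs Hirr [l Hl]; apply: Hirr; exists l.
have hh : @shom (FSol (prodr r)) (FSol r) fst.
  split; first by move=> t; exists (t, t).
  by [].
have [_ _ [H [Hsur _]]] :=
  hom_iter (Good_of (ndi_prod Hs)) (Good_of Hs) hh l.
exact: card_surj1 Hsur Hl.
Qed.

Definition condCg (X : finType) (r : X * X -> X * X) (one : X) : Prop :=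
  exists l : nat, forall s : X, exists ix : seq X,
    size ix = l /\ foldr (fun i x => sigm r i x) one ix = s.

Lemma foldr_zip (X : finType) (r : X * X -> X * X) (one : X) (s1 s2 : seq X) :
  size s1 = size s2 ->
  foldr (fun i x => sigm (prodr r) i x) (one, one) (zip s1 s2) =
  (foldr (fun i x => sigm r i x) one s1, foldr (fun i x => sigm r i x) one s2).
Proof.
elim: s1 s2 => [|a s1 IH] [|b s2] //= [E].
by rewrite IH.
Qed.

Lemma condC_prod (X : finType) (r : X * X -> X * X) (one : X) :
  condCg r one -> condCg (prodr r) (one, one).
Proof.
move=> [l Hl]; exists l => -[s1 s2].
have [i1 [E1 F1]] := Hl s1; have [i2 [E2 F2]] := Hl s2.
exists (zip i1 i2); split; first by rewrite size_zip E1 E2 minnn.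
by rewrite foldr_zip ?E1 ?E2 // F1 F2.
Qed.

Lemma indec_of (X : finType) (r : X * X -> X * X) (one : X) :
  ndi_solution r -> condCg r one -> indecomposable r.
Proof.
move=> [_ Hn _] [l Hl] [Y1 [Y2 [[n1 n2 dis cov] [I1 I2]]]].
have back (Y Y' : {set X}) : nd_invariant r Y -> nd_invariant r Y' ->
    [disjoint Y & Y'] -> Y :|: Y' = setT ->
    forall x y, sigm r x y \in Y -> y \in Y.
  move=> [_ _ HY _] [_ _ HY' _] d c x y Hy.
  have : x \in Y :|: Y' by rewrite c inE.
  rewrite inE => /orP [xY|xY'].
  - have [_ [_ Hs]] := (HY x xY).1.
    have [y' y'Y E] := Hs _ Hy.
    by rewrite -((bij_inj (Hn x).1) _ _ E).
  - case yY: (y \in Y) => //.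
    have : y \in Y :|: Y' by rewrite c inE.
    rewrite inE yY /= => yY'.
    have [Hin _] := (HY' x xY').1.
    by have := Hin y yY'; rewrite (disjointFr d Hy).
have reach (Y : {set X}) : (forall x y, sigm r x y \in Y -> y \in Y) ->
    Y != set0 -> one \in Y.
  move=> Hb /set0Pn [p pY]; have [ix [_ E]] := Hl p.
  move: pY; rewrite -E; elim: ix {E} => [|i ix IH] //= H.
  apply: IH; exact: Hb H.
have o1 := reach _ (back _ _ I1 I2 dis cov) n1.
have dis' : [disjoint Y2 & Y1] by rewrite disjoint_sym.
have cov' : Y2 :|: Y1 = setT by rewrite setUC.
have o2 := reach _ (back _ _ I2 I1 dis' cov') n2.
by rewrite (disjointFr dis o1) in o2.
Qed.

Lemma main_iter (n : nat) (hn : 0 < n) (r : 'I_n * 'I_n -> 'I_n * 'I_n) :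
  ndi_solution r -> irretractable r -> condC r (Ordinal hn) ->
  forall k, exists (Y : finType) (rY : Y * Y -> Y * Y) (one : Y),
    [/\ #|Y| = n ^ (2 ^ k), ndi_solution rY, irretractable rY & condCg rY one].
Proof.
move=> Hs Hi Hc; elim=> [|k [Y [rY [one [Hc1 Hs1 Hi1 HC1]]]]].
  by exists 'I_n, r, (Ordinal hn); split => //; rewrite card_ord expn1.
exists (Y * Y)%type, (prodr rY), (one, one); split.
- by rewrite card_prod Hc1 -expnD addnn -mul2n -expnS.
- exact: ndi_prod.
- exact: irr_prod.
- exact: condC_prod.
Qed.

Theorem corollary1 (n : nat) (hn : 0 < n) (r : 'I_n * 'I_n -> 'I_n * 'I_n) :
  ndi_solution r -> irretractable r -> indecomposable r ->
  condC r (Ordinal hn) ->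
  forall k : nat, 1 <= k ->
    exists (Y : finType) (rY : Y * Y -> Y * Y),
      [/\ #|Y| = n ^ (2 ^ k), ndi_solution rY, irretractable rY & indecomposable rY].
Proof.
move=> Hs Hi _ Hc k _.
have [Y [rY [one [H1 H2 H3 H4]]]] := main_iter Hs Hi Hc k.
exists Y, rY; split => //; exact: indec_of H2 H4.
Qed.
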